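(* For every agent $i$ and every measurable $q_i:[0,1]\to[0,1]$, letting $r_i=\int_0^1q_i(x)\,dx$ and $H_i(t)=F_{i,0}(2\kappa t)$, \[ \int_0^1 q_i(x)\,F_{i,x}^{-1}(1-q_i(x))\,dx\ \le\ r_i\,F_{i,0}^{-1}(1-r_i)\ =\ 2\kappa\, r_i\,H_i^{-1}(1-r_i). \]
   Context: Agent $i$ has a valuation $v_i:[0,1]\to\mathbb{R}_{\ge0}$ drawn from a distribution $\mathcal F_i$; almost surely $v_i$ is non-decreasing, concave and differentiable on $[0,1]$ (one-sided derivatives at endpoints); $\kappa\ge1$ is a fixed constant. For $x\in[0,1]$, $F_{i,x}$ is the cdf of $v_i'(x)$ for $v_i\sim\mathcal F_i$, and $F^{-1}(s)=\inf\{t:F(t)\ge s\}$ denotes the quantile function of a cdf $F$ (convention $0\cdot F^{-1}(1)=0$). Regularity assumption: $q\mapsto q\,F_{i,0}^{-1}(1-q)$ is concave on $[0,1]$. *)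

(* Defs.v *)
From HB Require Import structures.
From mathcomp Require Import all_boot all_order all_algebra.
From mathcomp Require Import all_classical all_reals all_analysis.
Set Implicit Arguments. Unset Strict Implicit. Unset Printing Implicit Defensive.
Import Order.TTheory GRing.Theory Num.Theory.
Import numFieldNormedType.Exports.
Local Open Scope classical_set_scope.
Local Open Scope ring_scope.

Section Defs.
Variable R : realType.

Definition nondecr01 (v : R -> R) : Prop :=
  forall x y, 0 <= x -> x <= y -> y <= 1 -> v x <= v y.

Definition concave01 (v : R -> R) : Prop :=
  forall x y l, 0 <= x <= 1 -> 0 <= y <= 1 -> 0 <= l <= 1 ->
    l * v x + (1 - l) * v y <= v (l * x + (1 - l) * y).

(* difference-quotient filter at x, increments restricted to stay in [0,1]
   (so at the endpoints this is the one-sided derivative) *)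
Definition dq01 (v : R -> R) (x : R) : set_system R :=
  (fun h : R => h^-1 * (v (x + h) - v x)) @
     within (fun h : R => h != 0 /\ 0 <= x + h <= 1) (nbhs (0 : R)).

Definition has_deriv01 (v : R -> R) (x l : R) : Prop := dq01 v x --> l.

Definition differentiable01 (v : R -> R) : Prop :=
  forall x, 0 <= x <= 1 -> exists l, has_deriv01 v x l.

Definition deriv01 (v : R -> R) (x : R) : R := lim (dq01 v x).

Definition good_valuation (v : R -> R) : Prop :=
  (forall x, 0 <= x <= 1 -> 0 <= v x) /\ nondecr01 v /\ concave01 v /\
  differentiable01 v.

Definition cdfR d (T : measurableType d) (P : probability T R) (X : T -> R)
  (t : R) : R := fine (P [set w | X w <= t]).

Definition Fder d (T : measurableType d) (P : probability T R)
  (V : T -> R -> R) (x : R) : R -> R :=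
  cdfR P (fun w => deriv01 (V w) x).

(* quantile F^{-1}(s) = inf {t | F t >= s}, extended-real valued
   (inf of the empty set is +oo) *)
Definition quantile (F : R -> R) (s : R) : \bar R :=
  ereal_inf [set t%:E | t in [set t : R | s <= F t]].

(* q |-> q * F^{-1}(1 - q) is concave on [0,1] (extended-real arithmetic,
   with 0 * (+-oo) = 0) *)
Definition regular (F : R -> R) : Prop :=
  forall a b l, 0 <= a <= 1 -> 0 <= b <= 1 -> 0 <= l <= 1 ->
   ((l * a + (1 - l) * b)%:E * quantile F (1 - (l * a + (1 - l) * b)) >=
    l%:E * (a%:E * quantile F (1 - a)) +
    (1 - l)%:E * (b%:E * quantile F (1 - b)))%E.

End Defs.

(* Main.v *)
Require Import Defs.
From HB Require Import structures.
From mathcomp Require Import all_boot all_order all_algebra.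
From mathcomp Require Import all_classical all_reals all_analysis.
From mathcomp Require Import ring lra.
From mathcomp Require Import measurable_realfun.
Import Order.TTheory GRing.Theory Num.Theory.
Import numFieldNormedType.Exports.
Local Open Scope classical_set_scope.
Local Open Scope ring_scope.

Section Part1.
Variable R : realType.

Lemma conc3 (v : R -> R) a b c : concave01 v -> 0 <= a -> a < b -> b < c -> c <= 1 ->
  (c - b) * v a + (b - a) * v c <= v b * (c - a).
Proof.
move=> hv a0 ab bc c1.
have ca : 0 < c - a by lra.
pose l := (c - b) / (c - a).
have hl : l * a + (1 - l) * c = b.
  rewrite /l; field; lra.
have l01 : 0 <= l <= 1.
  rewrite /l; apply/andP; split; first by apply: divr_ge0; lra.
  by rewrite ler_pdivrMr //; lra.
have := hv a c l ltac:(lra) ltac:(lra) l01; rewrite hl => H.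
have -> : (c - b) = l * (c - a) by rewrite /l mulfVK //; lra.
have -> : (b - a) = (1 - l) * (c - a).
  rewrite /l mulrBl mul1r mulfVK; lra.
have := ler_wpM2r (ltW ca) H. rewrite mulrDl. lra.
Qed.

Definition S01 (x : R) := (fun h : R => h != 0 /\ 0 <= x + h <= 1).

Lemma S01_proper x : 0 <= x <= 1 -> ProperFilter (within (S01 x) (nbhs (0:R))).
Proof.
move=> x01; apply: within_nbhs_proper => B /nbhs_ballP [e /= e0 eB].
pose t := Num.min (e / 2) (1 / 2).
have t0 : 0 < t by rewrite lt_min; apply/andP; split; lra.
have te : t < e by rewrite gt_min; apply/orP; left; lra.
have t1 : t <= 1/2 by rewrite ge_min; apply/orP; right.
case: (lerP x (1/2)) => hx.
  exists t; split.
    by split; [rewrite gt_eqF | apply/andP; split]; lra.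
  by apply: eB; rewrite /ball /= sub0r normrN gtr0_norm.
exists (- t); split.
  by split; [rewrite oppr_eq0 gt_eqF | apply/andP; split]; lra.
by apply: eB; rewrite /ball /= sub0r opprK gtr0_norm.
Qed.


Lemma qle (A B p q : R) : 0 < p -> 0 < q -> A * q <= B * p -> A / p <= B / q.
Proof.
move=> p0 q0 H; rewrite ler_pdivrMr // mulrAC ler_pdivlMr //.
Qed.

Lemma deriv_le (v : R -> R) x : good_valuation v -> 0 <= x <= 1 ->
  deriv01 v x <= deriv01 v 0.
Proof.
case=> _ [_ [hc hd]] /andP[x0 x1].
have [->|xpos] := eqVneq x 0; first by [].
have {}xpos : 0 < x by rewrite lt_neqAle eq_sym xpos x0.
pose m := (v x - v 0) / x.
apply: (@le_trans _ _ m).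
  have [lx Hx] := hd x ltac:(apply/andP; split => //).
  rewrite /deriv01 /dq01.
  apply: (@limr_le _ _ (@S01_proper x ltac:(apply/andP; split => //))).
    exact: cvgP Hx.
  suff H : \forall h \near nbhs (0:R), S01 x h -> h^-1 * (v (x + h) - v x) <= m by exact H.
  apply: nearW => h [hne /andP[h1 h2]].
  case: (ltgtP h 0) => hs; last by move: hne; rewrite hs eqxx.
    have -> : h^-1 * (v (x+h) - v x) = (v x - v (x+h)) / (-h).
      by field.
    have [e0|epos] := eqVneq (x + h) 0.
      have -> : -h = x by lra.
      by rewrite e0.
    have {}epos : 0 < x + h by rewrite lt_neqAle eq_sym epos h1.
    apply: qle; [lra|lra|].
    have := conc3 _ _ _ _ hc (le_refl 0) epos (ltac:(lra) : x + h < x) x1.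
    nra.
  rewrite mulrC; apply: qle; [lra|lra|].
  have := conc3 _ _ _ _ hc (le_refl 0) xpos (ltac:(lra) : x < x + h) h2.
  nra.
have [l0 H0] := hd 0 ltac:(apply/andP; split => //).
rewrite /deriv01 /dq01.
apply: (@limr_ge _ _ (@S01_proper 0 ltac:(apply/andP; split => //))).
  exact: cvgP H0.
suff H : \forall h \near nbhs (0:R), S01 0 h -> m <= h^-1 * (v (0 + h) - v 0) by exact H.
apply: filterS (num_topology.nbhs0_lt xpos) => h hx [hne /andP[h1 h2]].
rewrite add0r in h1 h2 *.
have hpos : 0 < h by rewrite lt_neqAle eq_sym hne h1.
rewrite mulrC; apply: qle; [lra|lra|].
have := conc3 _ _ _ _ hc (le_refl 0) hpos hx x1.
nra.
Qed.

End Part1.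

Section Part2.
Variables (R : realType) (d : measure_display) (T : measurableType d)
  (P : probability T R) (V : T -> R -> R).
Hypothesis hae : {ae P, forall w, good_valuation (V w)}.
Hypothesis hm : forall x, 0 <= x <= 1 -> measurable_fun setT (fun w => deriv01 (V w) x).

Lemma mset x t : 0 <= x <= 1 -> measurable [set w | deriv01 (V w) x <= t].
Proof.
move=> x01.
rewrite (_ : [set w | _] = setT `&` (fun w => deriv01 (V w) x) @^-1` `]-oo, t]).
  by apply: (hm _ x01) => //; exact: measurable_itv.
by apply/seteqP; split => w /=; rewrite in_itv /=; [move=> ->|case].
Qed.

Lemma Fder_mono x t : 0 <= x <= 1 -> Fder P V 0 t <= Fder P V x t.
Proof.
move=> x01; rewrite /Fder /cdfR.
case: hae => N [mN PN sub].
have m0 := @mset 0 t ltac:(lra).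
have mx := @mset x t x01.
apply: fine_le; rewrite ?inE; try exact: fin_num_measure.
apply: (@le_trans _ _ (P ([set w | deriv01 (V w) x <= t] `|` N))).
  apply: le_measure; rewrite ?inE //; first exact: measurableU.
  move=> w /= hw.
  have [g|ng] := pselect (good_valuation (V w)).
    by left; apply: le_trans hw; exact: deriv_le.
  by right; apply: sub.
apply: le_trans (measureU2 _ mx mN) _.
rewrite le_eqVlt; apply/orP; left; apply/eqP.
rewrite -[RHS]adde0; congr (_ + _); exact: PN.
Qed.

Lemma quantile_le x s : 0 <= x <= 1 ->
  (quantile (Fder P V x) s <= quantile (Fder P V 0) s)%E.
Proof.
move=> x01; rewrite /quantile; apply: ereal_inf_le_tmp.
apply: image_subset => t /= h; apply: le_trans h _; exact: Fder_mono.
Qed.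

End Part2.

Section Part3.
Variables (R : realType) (d : measure_display) (T : measurableType d)
  (P : probability T R) (X : T -> R).
Hypothesis mX : forall t, measurable [set w | X w <= t].

Lemma cdf_fin t : (P [set w | X w <= t] = (cdfR P X t)%:E).
Proof. by rewrite /cdfR fineK //; exact: fin_num_measure. Qed.

Lemma cdf_mono t t' : t <= t' -> cdfR P X t <= cdfR P X t'.
Proof.
move=> tt; rewrite -lee_fin -!cdf_fin; apply: le_measure; rewrite ?inE //.
by move=> w /= h; apply: le_trans h tt.
Qed.

Lemma cdf_up s : s < 1 -> exists t, s <= cdfR P X t.
Proof.
move=> s1; apply: contrapT => /forallNP H.
pose A n := [set w | X w <= (n%:R : R)].
have L : (P \o A) @ \oo --> P (\bigcup_n A n).
  apply: nondecreasing_cvg_mu.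
  - by move=> n; exact: mX.
  - by apply: bigcupT_measurable => n; exact: mX.
  move=> n m nm; apply/subsetPset => w /= h; apply: le_trans h _.
  by rewrite ler_nat.
have AT : \bigcup_n A n = setT.
  apply/seteqP; split => // w _; exists (Num.bound (X w)) => //=.
  apply: ltW; apply: le_lt_trans (unstable.ltr_norm_bound _); exact: ler_norm.
rewrite AT probability_setT in L.
have H2 : \forall n \near \oo, ((P \o A) n <= s%:E)%E.
  apply: nearW => n; rewrite /= /A cdf_fin lee_fin; apply: ltW.
  by rewrite ltNge; apply/negP => /H.
have := lime_le (cvgP _ L) H2.
by rewrite (cvg_lim _ L) // lee_fin => /(_ eventually_filter); lra.
Qed.

Lemma cdf_low s : 0 < s -> exists t, cdfR P X t < s.
Proof.
move=> s0; apply: contrapT => /forallNP H.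
pose B n := [set w | X w <= - (n%:R : R)].
have L : (P \o B) @ \oo --> P (\bigcap_n B n).
  apply: nonincreasing_cvg_mu => //.
  - by rewrite ltey_eq; apply/orP; left; apply: fin_num_measure; exact: mX.
  - by move=> n; exact: mX.
  - by apply: bigcapT_measurable => n; exact: mX.
  move=> n m nm; apply/subsetPset => w /= h; apply: le_trans h _.
  by rewrite lerN2 ler_nat.
have B0 : \bigcap_n B n = set0.
  apply/seteqP; split => // w /= h; have := h (Num.bound (X w)) I => /=.
  have := unstable.ltr_norm_bound (X w).
  have := ler_norm (- X w); rewrite normrN /B /= => h1 h2 h3.
  lra.
rewrite B0 measure0 in L.
have H2 : \forall n \near \oo, (s%:E <= (P \o B) n)%E.
  apply: nearW => n; rewrite /= /B cdf_fin lee_fin.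
  by rewrite leNgt; apply/negP => /H.
have := lime_ge (cvgP _ L) H2.
by rewrite (cvg_lim _ L) // lee_fin => /(_ eventually_filter); lra.
Qed.

Lemma quantile_fin s : 0 < s < 1 -> quantile (cdfR P X) s \is a fin_num.
Proof.
move=> /andP[s0 s1].
have [t0 h0] := @cdf_up s s1.
have [t1 h1] := @cdf_low s s0.
apply: fin_real; apply/andP; split.
  apply: (@lt_le_trans _ _ t1%:E); first exact: ltNyr.
  apply: le_ereal_inf_tmp => _ [t /= ht <-]; rewrite lee_fin.
  rewrite leNgt; apply/negP => tt1.
  have := @cdf_mono _ _ (ltW tt1); lra.
apply: (@le_lt_trans _ _ t0%:E); last exact: ltry.
by apply: ereal_inf_lbound; exists t0.
Qed.

End Part3.

Section Part4.
Variable R : realType.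
Local Open Scope ring_scope.

Lemma conc3g (v : R -> R) a b c :
  (forall l, 0 <= l <= 1 -> l * v a + (1 - l) * v c <= v (l * a + (1 - l) * c)) ->
  a < b -> b < c ->
  (c - b) * v a + (b - a) * v c <= v b * (c - a).
Proof.
move=> hv ab bc.
have ca : 0 < c - a by lra.
pose l := (c - b) / (c - a).
have hl : l * a + (1 - l) * c = b.
  rewrite /l; field; lra.
have l01 : 0 <= l <= 1.
  rewrite /l; apply/andP; split; first by apply: divr_ge0; lra.
  by rewrite ler_pdivrMr //; lra.
have := hv l l01; rewrite hl => H.
have -> : (c - b) = l * (c - a) by rewrite /l mulfVK //; lra.
have -> : (b - a) = (1 - l) * (c - a).
  rewrite /l mulrBl mul1r mulfVK; lra.
have := ler_wpM2r (ltW ca) H. rewrite mulrDl. lra.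
Qed.

Lemma support (G : R -> \bar R) r :
  (forall a b l, 0 <= a <= 1 -> 0 <= b <= 1 -> 0 <= l <= 1 ->
     (l%:E * G a + (1 - l)%R%:E * G b <= G (l * a + (1 - l) * b)%R)%E) ->
  G 0 = 0%E -> (forall s, 0 < s < 1 -> G s \is a fin_num) -> G 1 = -oo%E ->
  0 < r < 1 ->
  exists c, forall s, 0 <= s <= 1 -> (G s <= (fine (G r) + c * (s - r))%R%:E)%E.
Proof.
move=> hG G0 Gfin G1 /andP[r0 r1].
pose g s := fine (G s).
have Gg s : 0 <= s < 1 -> G s = (g s)%:E.
  move=> /andP[s0 s1]; rewrite /g fineK //.
  have [->|sn0] := eqVneq s 0; first by rewrite G0.
  apply: Gfin; rewrite s1 andbT lt_neqAle eq_sym sn0 s0 //.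
have gc a b : 0 <= a < 1 -> 0 <= b < 1 -> forall l, 0 <= l <= 1 ->
    l * g a + (1 - l) * g b <= g (l * a + (1 - l) * b).
  move=> ha hb l hl.
  have hab : 0 <= l * a + (1 - l) * b < 1.
    move: (ha) (hb) (hl) => /andP[? ?] /andP[? ?] /andP[? ?].
    apply/andP; split; first nra.
    case: (lerP a b) => hab'.
      have : 0 <= l * (b - a) by apply: mulr_ge0; lra.
      nra.
    have : 0 <= (1 - l) * (a - b) by apply: mulr_ge0; lra.
    nra.
  rewrite -lee_fin EFinD !EFinM -!Gg //.
  apply: hG => //; apply/andP; split; lra.
have slope s t : 0 <= s < r -> r < t < 1 ->
    (g t - g r) / (t - r) <= (g r - g s) / (r - s).
  move=> hs ht.
  have := @conc3g g s r t (gc s t ltac:(lra) ltac:(lra)) ltac:(lra) ltac:(lra).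
  move=> H; apply: qle; [lra|lra|nra].
pose E := [set (g r - g s) / (r - s) | s in [set s | 0 <= s < r]].
pose t := (r + 1) / 2.
have ht : r < t < 1 by apply/andP; split; rewrite /t; lra.
have Elb : lbound E ((g t - g r) / (t - r)).
  by move=> _ [s /= hs <-]; apply: slope.
have Ene : E !=set0 by exists ((g r - g 0) / (r - 0)); exists 0 => //=; lra.
exists (inf E) => s /andP[s0 s1].
rewrite -/(g r).
case: (ltgtP s r) => hs.
- rewrite Gg; last lra.
  rewrite lee_fin.
  have : inf E <= (g r - g s) / (r - s).
    apply: ge_inf; first by exists ((g t - g r) / (t - r)).
    by exists s => //=; lra.
  rewrite ler_pdivlMr; last lra.
  nra.
- have [->|s1'] := eqVneq s 1; first by rewrite G1 leNye.
  have {}s1' : s < 1 by rewrite lt_neqAle s1' s1.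
  rewrite Gg; last lra.
  rewrite lee_fin.
  have : (g s - g r) / (s - r) <= inf E.
    apply: lb_le_inf => // _ [u /= hu <-]; apply: slope => //; lra.
  rewrite ler_pdivrMr; last lra.
  nra.
- by rewrite hs subrr mulr0 addr0 Gg ?lexx //; lra.
Qed.

End Part4.

Section Part5.
Local Open Scope ereal_scope.

Lemma le_integral_gen d (T : measurableType d) (R : realType) (mu : measure T R)
  (D : set T) (f g : T -> \bar R) :
  (forall x, D x -> f x <= g x) ->
  \int[mu]_(x in D) f x <= \int[mu]_(x in D) g x.
Proof.
move=> fg; rewrite /integral; apply: leeB.
- apply: ereal_sup_le => _ [h hh <-]; exists h => //= x; apply: le_trans (hh x) _.
  rewrite !funeposE !patchE; case: ifPn => // /set_mem /fg H.
  by rewrite ge_max !le_max H lexx !orbT.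
- apply: ereal_sup_le => _ [h hh <-]; exists h => //= x; apply: le_trans (hh x) _.
  rewrite !funenegE !patchE; case: ifPn => // /set_mem /fg H.
  by rewrite ge_max !le_max leeN2 H lexx !orbT.
Qed.

End Part5.

Section Part6.
Variable R : realType.
Local Open Scope ring_scope.

Lemma quantile_scale (F : R -> R) k s : 0 < k ->
  quantile F s = (k%:E * quantile (fun t => F (k * t)%R) s)%E.
Proof.
move=> k0; rewrite /quantile -ereal_inf_pZl //; congr ereal_inf.
apply/seteqP; split.
  move=> _ [t /= ht <-]; exists (t / k)%:E.
    by exists (t / k) => //=; rewrite mulrC divfK // gt_eqF.
  by rewrite -EFinM mulrC divfK // gt_eqF.
move=> _ [_ [t /= ht <-] <-]; exists (k * t) => //.
Qed.

Lemma quantile0 (F : R -> R) : (forall t, 0 <= F t) -> quantile F 0 = -oo%E.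
Proof.
move=> F0; rewrite /quantile -ereal_inf_real; congr ereal_inf.
apply/seteqP; split => _ [t ht <-]; exists t => //=.
Qed.

End Part6.

Local Open Scope ring_scope.
Local Notation D01 := ([set` `[0%R, 1%R]]).

Theorem mainTheorem11 (R : realType) (d : measure_display)
  (T : measurableType d) (P : probability T R) (V : T -> R -> R) (kappa : R)
  (q : R -> R) :
  1 <= kappa ->
  {ae P, forall w, good_valuation (V w)} ->
  (forall x, 0 <= x <= 1 -> measurable_fun setT (fun w => deriv01 (V w) x)) ->
  regular (Fder P V 0) ->
  measurable_fun (`[0%R, 1%R] : set R) q ->
  (forall x, 0 <= x <= 1 -> 0 <= q x <= 1) ->
  let r := (\int[@lebesgue_measure R]_(x in (`[0%R, 1%R] : set R)) (q x)%:E)%E in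
  let H := fun t => Fder P V 0 (2 * kappa * t) in
  (\int[@lebesgue_measure R]_(x in (`[0%R, 1%R] : set R))
      ((q x)%:E * quantile (Fder P V x) (1 - q x)) <=
     r * quantile (Fder P V 0) (1 - fine r))%E /\
  (r * quantile (Fder P V 0) (1 - fine r) =
     (2 * kappa)%:E * (r * quantile H (1 - fine r)))%E.
Proof.
move=> hk hae hm hreg mq hq r H.
split; last first.
  rewrite /H {1}(@quantile_scale _ (Fder P V 0) (2 * kappa)); last lra.
  by rewrite muleCA.
have mD : measurable (D01 : set R) := measurable_itv _.
have muD : lebesgue_measure (D01 : set R) = 1%E.
  by rewrite lebesgue_measure_itv /= lte_fin ltr01 -EFinB subr0.
have Dx x : (D01 : set R) x -> 0 <= x <= 1 by rewrite /= in_itv.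
have mq' := proj2 (measurable_realfun.measurable_EFinP (D01 : set R) q) mq.
have iq : (@lebesgue_measure R).-integrable (D01 : set R) (EFin \o q).
  apply: measurable_bounded_integrable => //; first by change (lebesgue_measure (D01 : set R) < +oo)%E; rewrite muD ltry.
  exists 1; split; first exact: num_real.
  move=> M M1 x /Dx /hq /andP[a b] /=; rewrite ger0_norm //; lra.
have icst (a : R) : (@lebesgue_measure R).-integrable (D01 : set R) (EFin \o cst a).
  apply: measurable_bounded_integrable => //; first by change (lebesgue_measure (D01 : set R) < +oo)%E; rewrite muD ltry.
  exists `|a|; split; first exact: num_real.
  by move=> M M1 x _ /=; apply: ltW.
have r0 : (0 <= r)%E.
  by apply: integral_ge0 => x /Dx /hq /andP[? _]; rewrite lee_fin.
have r1 : (r <= 1)%E.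
  have : (r <= \int[@lebesgue_measure R]_(x in (D01 : set R)) (cst 1%E) x)%E.
    by apply: le_integral_gen => x /Dx /hq /andP[_ ?]; rewrite lee_fin.
  rewrite integral_cst //; set m := (X in (_ * X)%E).
  have -> : m = 1%E by exact: muD.
  by rewrite mule1.
have rE : r = (fine r)%:E.
  by rewrite fineK // ge0_fin_numE // (le_lt_trans r1) ?ltry.
have Fge0 x t : 0 <= Fder P V x t.
  by rewrite /Fder /cdfR; apply: fine_ge0; exact: measure_ge0.
have hpt x : (D01 : set R) x ->
  ((q x)%:E * quantile (Fder P V x) (1 - q x) <=
   (q x)%:E * quantile (Fder P V 0) (1 - q x))%E.
  move=> /Dx x01; apply: lee_wpmul2l.
    by move: (hq x x01) => /andP[? _]; rewrite lee_fin.
  exact: quantile_le.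
set rr := fine r in rE *.
have rr0 : 0 <= rr by rewrite -lee_fin -rE.
have rr1 : rr <= 1 by rewrite -lee_fin -rE.
have [rrz|rrnz] := eqVneq rr 0.
  have q0 : ae_eq (@lebesgue_measure R) (D01 : set R) (EFin \o q) (cst 0%E).
    apply/ae_eq_integral_abs => //.
    transitivity r; last by rewrite rE rrz.
    apply: eq_integral => x /set_mem /Dx /hq /andP[? _].
    by rewrite /= ger0_norm.
  pose g := fun x => ((q x)%:E * +oo)%E.
  have mg : measurable_fun (D01 : set R) g.
    by apply: emeasurable_funM => //; exact: measurable_cst.
  have h1 : (\int[@lebesgue_measure R]_(x in (D01 : set R))
      ((q x)%:E * quantile (Fder P V x) (1 - q x)) <=
      \int[@lebesgue_measure R]_(x in (D01 : set R)) g x)%E.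
    apply: le_integral_gen => x Dx'; apply: le_trans (hpt x Dx') _.
    apply: lee_wpmul2l; last exact: leey.
    by move: Dx' => /Dx /hq /andP[? _]; rewrite lee_fin.
  apply: (le_trans h1).
  rewrite (ae_eq_integral (cst 0%E)) //; first by rewrite integral0 rE rrz mul0e.
  move: q0; apply: filterS => x h Dx'.
  by move: (h Dx'); rewrite /g /= => [[->]]; rewrite mul0e.
have [rro|rrno] := eqVneq rr 1.
  have q1 : ae_eq (@lebesgue_measure R) (D01 : set R) (EFin \o (fun x => 1 - q x)) (cst 0%E).
    apply/ae_eq_integral_abs => //.
      apply/measurable_EFinP; apply: measurable_funB => //; exact: measurable_cst.
    transitivity (\int[@lebesgue_measure R]_(x in (D01 : set R)) ((cst 1 x)%:E - (q x)%:E))%E.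
      apply: eq_integral => x /set_mem /Dx /hq /andP[_ ?].
      by rewrite /= ger0_norm ?EFinB // subr_ge0.
    rewrite integralB_EFin //.
    set I1 := (X in (X - _)%E); set I2 := (X in (_ - X)%E).
    have -> : I2 = r by [].
    have -> : I1 = 1%E.
      rewrite /I1 (_ : (fun x => (cst 1 x)%:E) = cst 1%E) // integral_cst //.
      set m := (X in (_ * X)%E); have -> : m = 1%E by exact: muD.
      by rewrite mule1.
    by rewrite rE rro subee.
  pose E := (D01 : set R) `&` q @^-1` [set 1].
  have mE : measurable E by apply: mq => //; exact: measurable_set1.
  pose h := fun x => ((\1_E x : R)%:E * +oo)%E.
  have mh : measurable_fun (D01 : set R) h.
    apply: emeasurable_funM; last exact: measurable_cst.
    by apply/measurable_EFinP; exact: measurable_indic.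
  have Ih : (\int[@lebesgue_measure R]_(x in (D01 : set R)) h x = +oo)%E.
    rewrite (ae_eq_integral (cst +oo%E)) //.
      rewrite integral_cst //.
      set m := (X in (_ * X)%E); have -> : m = 1%E by exact: muD.
      by rewrite mule1.
    move: q1; apply: filterS => x hx Dx'.
    move: (hx Dx'); rewrite /= => -[/eqP]; rewrite subr_eq0 eq_sym => /eqP qx1.
    by rewrite /h indicE mem_set //= mul1e.
  rewrite integralE.
  set Ip := (X in (X - _)%E); set In := (X in (_ - X)%E).
  have -> : In = +oo%E.
    apply/eqP; rewrite -leye_eq -Ih; apply: le_integral_gen => x Dx'.
    rewrite /h indicE; case: (boolP (x \in E)) => xE.
      have qx1 : q x = 1 by move/set_mem: xE => [].
      rewrite funenegE qx1 subrr quantile0 // mul1e /=.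
      by rewrite mul1e /= le_max lexx.
    by rewrite /= mul0e; exact: funeneg_ge0.
  by rewrite addeNy leNye.
have rr01 : 0 < rr < 1.
  by apply/andP; split; [rewrite lt_neqAle eq_sym rrnz rr0|rewrite lt_neqAle rrno rr1].
pose G := fun s : R => (s%:E * quantile (Fder P V 0) (1 - s))%E.
have hG : forall a b l, 0 <= a <= 1 -> 0 <= b <= 1 -> 0 <= l <= 1 ->
    (l%:E * G a + (1 - l)%R%:E * G b <= G (l * a + (1 - l) * b)%R)%E.
  by move=> a b l ha hb hl; exact: hreg.
have G0 : G 0 = 0%E by rewrite /G mul0e.
have mX0 : forall t, measurable [set w | deriv01 (V w) 0 <= t].
  by move=> t; apply: (@mset _ _ _ _ hm 0 t); lra.
have Gfin : forall s, 0 < s < 1 -> G s \is a fin_num.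
  move=> s /andP[s0 s1]; rewrite /G fin_numM //.
  by apply: (@quantile_fin _ _ _ P _ mX0 (1 - s)); apply/andP; split; lra.
have G1 : G 1 = -oo%E by rewrite /G mul1e subrr quantile0.
have [c hc] := @support _ G rr hG G0 Gfin G1 rr01.
pose a := fine (G rr) - c * rr.
have GrE : G rr = (fine (G rr))%:E by rewrite fineK // Gfin.
have h1 : (\int[@lebesgue_measure R]_(x in (D01 : set R))
      ((q x)%:E * quantile (Fder P V x) (1 - q x)) <=
    \int[@lebesgue_measure R]_(x in (D01 : set R)) ((cst a x)%:E + c%:E * (q x)%:E))%E.
  apply: le_integral_gen => x Dx'; apply: le_trans (hpt x Dx') _.
  apply: le_trans (hc _ (hq x (Dx x Dx'))) _.
  rewrite -EFinM -EFinD lee_fin /a /=; nra.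
apply: (le_trans h1).
rewrite integralD //; last by apply: integrableZl.
rewrite integralZl //.
  set I1 := (X in (X + _)%E).
  have -> : I1 = a%:E.
    rewrite /I1 (_ : (fun x => (cst a x)%:E) = cst a%:E) // integral_cst //.
    set m := (X in (_ * X)%E); have -> : m = 1%E by exact: muD.
    by rewrite mule1.
  have -> : (\int[@lebesgue_measure R]_(x in (D01 : set R)) (q x)%:E)%E = r by [].
  rewrite rE -EFinM -EFinD.
  change ((a + c * rr)%:E <= G rr)%E.
  rewrite GrE lee_fin /a; lra.
apply: measurable_bounded_integrable => //.
- set m := (X in (X < _)%E); have -> : m = 1%E by exact: muD.
  exact: ltry.
- exists `|a|; split; first exact: num_real.
  by move=> M M1 x _ /=; apply: ltW.
Qed.
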